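(* Let $n,t,t'$ be positive integers with $n\ge t+12$ and $\prod_{j=n-t'+1}^{n} j\ge 2(t+2)(2t+1)t^2$, and let $m\ge0$ be an integer. Then there exist a map $\mathcal{E}_r:\mathcal{S}_n\to\mathcal{S}_{n+t'+1}$ and a decoding map $\mathcal{D}$ such that for every $\sigma\in\mathcal{S}_n$ and every sequence $\pi_e$ obtained from $\pi=\mathcal{E}_r(\sigma)$ by a single rank-modulation stuck-at error with parameters $t,m$ (as defined in the context), we have $\mathcal{D}(\pi_e)=\sigma$.
   Context: $\mathcal{S}_N$ denotes the set of permutations $\pi=(\pi(1),\ldots,\pi(N))$ of $[N]=\{1,\ldots,N\}$. Rank-modulation stuck-at error with parameters $t,m$: $\pi_e$ is obtained from $\pi\in\mathcal{S}_N$ if there exist a position $i_1\in[N]$ with $\pi(i_1)>m$ and $t_1\in[t]$ such that $\pi_e(i_1)=\pi(i_1)-t_1$, $\pi_e(i)=\pi(i)-1$ for all $i$ with $\pi(i)>\pi(i_1)$, and $\pi_e(i)=\pi(i)$ for all other $i$. *)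

(* Defs.v *)
From mathcomp Require Import all_boot all_order all_algebra all_fingroup.
Set Implicit Arguments. Unset Strict Implicit. Unset Printing Implicit Defensive.
Import GRing.Theory Num.Theory.
Local Open Scope ring_scope.

(* A permutation pi of [N] = {1..N} is represented by p : 'S_N (a permutation
   of 'I_N = {0..N-1}); the paper's value pi(i) is (p i).+1, positions are
   shifted by one as well.  Received (erroneous) sequences are integer-valued
   functions of the positions, since pi(i1) - t1 may fall outside [N] and
   values may collide. *)
Definition pval (N : nat) (p : 'S_N) (i : 'I_N) : int := ((p i).+1 : nat)%:Z.

Definition stuck_at_error (t m N : nat) (p : 'S_N) (pe : {ffun 'I_N -> int}) : Prop :=
  exists (i1 : 'I_N) (t1 : nat),
    [/\ (1 <= t1 <= t)%N,
        (m < (p i1).+1)%N,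
        pe i1 = pval p i1 - t1%:Z
      & forall i : 'I_N, i != i1 ->
          pe i = if pval p i1 < pval p i then pval p i - 1 else pval p i].

(* Main.v *)
From Pilot Require Import Defs.
From mathcomp Require Import all_boot all_order all_algebra all_fingroup.
From mathcomp Require Import zify.
Set Implicit Arguments. Unset Strict Implicit. Unset Printing Implicit Defensive.
Notation pval := Pilot.Defs.pval.

Lemma f_inj (A Y Y' : int) : Y != A -> Y' != A ->
  (if (A < Y)%R then (Y - 1)%R else Y) = (if (A < Y')%R then (Y' - 1)%R else Y') -> Y = Y'.
Proof. move=> /eqP h1 /eqP h2; case: ifP => H1; case: ifP => H2; lia. Qed.

Definition pe_of (N : nat) (p : 'S_N) (i1 : 'I_N) (t1 : nat) : {ffun 'I_N -> int} :=
  [ffun i => if i == i1 then (pval p i1 - t1%:Z)%R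
             else if (pval p i1 < pval p i)%R then (pval p i - 1)%R else pval p i].

Lemma pval_neq N (q : 'S_N) i j : i != j -> pval q i != pval q j.
Proof. by move=> ne; rewrite /pval eqz_nat eqSS (inj_eq val_inj) (inj_eq perm_inj). Qed.

Lemma pe_of_inj N (q q' : 'S_N) i1 t1 : pe_of q i1 t1 = pe_of q' i1 t1 -> q = q'.
Proof.
move=> E.
have Hi1 : q i1 = q' i1 :> nat.
  by have := congr1 (fun f : {ffun _ -> int} => f i1) E; rewrite !ffunE eqxx /pval; lia.
have eA : pval q' i1 = pval q i1 by rewrite /pval Hi1.
apply/permP => i; apply/val_inj => /=.
case: (eqVneq i i1) => [->|ne]; first exact: Hi1.
have := congr1 (fun f : {ffun _ -> int} => f i) E; rewrite !ffunE (negbTE ne) eA.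
move=> /f_inj; rewrite pval_neq // -eA pval_neq // => /(_ isT isT).
by rewrite /pval; lia.
Qed.

Lemma inj_off N (q : 'S_N) j t1 i k : i != j -> k != j ->
  pe_of q j t1 i = pe_of q j t1 k -> i = k.
Proof.
move=> ni nk; rewrite !ffunE (negbTE ni) (negbTE nk) => /f_inj.
rewrite !pval_neq // => /(_ isT isT) /eqP.
by rewrite /pval eqz_nat eqSS (inj_eq val_inj) (inj_eq perm_inj) => /eqP.
Qed.

Lemma pe_ge1 N (q : 'S_N) j t1 i : i != j -> (1 <= pe_of q j t1 i)%R.
Proof.
move=> ni; rewrite ffunE (negbTE ni) /pval; case: ifP => h; lia.
Qed.

Lemma partner N (q : 'S_N) i t1 : (0 < t1)%N -> (1 <= pe_of q i t1 i)%R ->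
  exists l, l != i /\ pe_of q i t1 l = pe_of q i t1 i.
Proof.
move=> t1p; rewrite ffunE eqxx /pval => h.
have hy : (q i - t1 < N)%N by have := ltn_ord (q i); lia.
exists ((q^-1)%g (Ordinal hy)).
have ql : q ((q^-1)%g (Ordinal hy)) = Ordinal hy by rewrite permKV.
have tle : (t1 <= q i)%N by lia.
split.
  apply/negP => /eqP e; move: ql; rewrite e => /(congr1 val) /=; lia.
rewrite ffunE ifF; last first.
  apply/negP => /eqP e; move: ql; rewrite e => /(congr1 val) /=; lia.
rewrite /pval ql /=; case: ifP => hh; lia.
Qed.

Lemma two_valid N (pe : {ffun 'I_N -> int}) (q q' : 'S_N) i j t1 t1' :
  (0 < t1)%N -> pe = pe_of q i t1 -> pe = pe_of q' j t1' -> i != j -> pe i = pe j.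
Proof.
move=> t1p E1 E2 nij.
have h1 : (1 <= pe i)%R by rewrite E2 pe_ge1.
move: h1; rewrite E1 => /(partner t1p) [l [nli el]].
case: (eqVneq l j) => [lj|nlj]; first by rewrite -lj el.
have : pe i = pe l by rewrite E1 el.
rewrite E2 => /(inj_off nij nlj) eil.
by move: nli; rewrite eil eqxx.
Qed.

Definition errb (t m N : nat) (p : 'S_N) (pe : {ffun 'I_N -> int}) : bool :=
  [exists i1 : 'I_N, exists t1 : 'I_t.+1,
     [&& (0 < t1)%N, (m < (p i1).+1)%N & pe == pe_of p i1 t1]].

Lemma errP t m N (p : 'S_N) pe : stuck_at_error t m p pe -> errb t m p pe.
Proof.
case=> i1 [t1] [/andP[h1 h2] hm he hi].
apply/existsP; exists i1; apply/existsP.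
have h2' : (t1 < t.+1)%N by rewrite ltnS.
exists (Ordinal h2'); rewrite /= h1 hm /=.
apply/eqP/ffunP => i; rewrite ffunE.
by case: eqP => [->|/eqP ne]; [exact: he | exact: hi ne].
Qed.

Lemma card_big_setU' (I : Type) (T : finType) (r : seq I) (P : {pred I})
    (F : I -> {set T}) :
  (#|\bigcup_(i <- r | P i)  F i| <= \sum_(i <- r | P i) #|F i|)%N.
Proof.
elim/big_ind2 : _ => // [|m A n B Am Bn]; first by rewrite cards0.
by rewrite (leq_trans (leq_card_setU _ _))// leq_add.
Qed.

Lemma card_pre t m N (pe : {ffun 'I_N -> int}) :
  (#|[set q : 'S_N | errb t m q pe]| <= 2 * t.+1)%N.
Proof.
case: (set_0Vmem [set q : 'S_N | errb t m q pe]) => [->|[q0]]; first by rewrite cards0.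
rewrite inE => /existsP[i0 /existsP[t0 /and3P[t0p _ /eqP E0]]].
pose S := [set i | pe i == pe i0].
have cS : (#|S| <= 2)%N.
  rewrite (cardsD1 i0).
  have : (#|S :\ i0| <= 1)%N.
    apply/card_le1_eqP => x y; rewrite !inE => /andP[xi /eqP ex] /andP[yi /eqP ey].
    have := @inj_off _ q0 i0 t0 x y xi yi; rewrite -E0 ex ey => -> //.
  by case: (i0 \in S) => /=; lia.
have sub : [set q : 'S_N | errb t m q pe] \subset
    \bigcup_(i in S) \bigcup_(t1 : 'I_t.+1) [set q : 'S_N | pe == pe_of q i t1].
  apply/subsetP => q; rewrite inE => /existsP[i /existsP[t1 /and3P[t1p _ /eqP E]]].
  apply/bigcupP; exists i.
    rewrite inE; case: (eqVneq i i0) => [->//|ne].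
    by apply/eqP; apply: (two_valid t1p E E0 ne).
  by apply/bigcupP; exists t1 => //; rewrite inE E.
apply: leq_trans (subset_leq_card sub) _.
apply: leq_trans (card_big_setU' _ _ _) _.
apply: (@leq_trans (\sum_(i in S) t.+1)).
  apply: leq_sum => i _.
  apply: leq_trans (card_big_setU' _ _ _) _.
  rewrite -[X in (_ <= X)%N]card_ord -sum1_card.
  apply: leq_sum => t1 _.
  apply/card_le1_eqP => x y; rewrite !inE => /eqP ex /eqP ey.
  by apply: (pe_of_inj (i1 := i) (t1 := t1)); rewrite -ex -ey.
by rewrite sum_nat_const leq_mul2r cS orbT.
Qed.

Definition confb (t m N : nat) (p q : 'S_N) : bool :=
  [exists i1 : 'I_N, exists t1 : 'I_t.+1,
     [&& (0 < t1)%N, (m < (p i1).+1)%N & errb t m q (pe_of p i1 t1)]].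

Lemma confP t m N (p q : 'S_N) :
  reflect (exists pe, errb t m p pe /\ errb t m q pe) (confb t m p q).
Proof.
apply: (iffP idP).
  move=> /existsP[i1 /existsP[t1 /and3P[h1 h2 h3]]].
  exists (pe_of p i1 t1); split => //.
  by apply/existsP; exists i1; apply/existsP; exists t1; rewrite h1 h2 eqxx.
move=> [pe [/existsP[i1 /existsP[t1 /and3P[h1 h2 /eqP h3]]] hq]].
by apply/existsP; exists i1; apply/existsP; exists t1; rewrite h1 h2 -h3.
Qed.

Lemma conf_sym t m N (p q : 'S_N) : confb t m p q -> confb t m q p.
Proof. by move=> /confP[pe [a b]]; apply/confP; exists pe. Qed.

Lemma card_nb t m N (c : 'S_N) :
  (#|[set q : 'S_N | confb t m c q]| <= N * (t.+1 * (2 * t.+1)))%N.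
Proof.
have sub : [set q : 'S_N | confb t m c q] \subset
  \bigcup_(i1 : 'I_N) \bigcup_(t1 : 'I_t.+1) [set q : 'S_N | errb t m q (pe_of c i1 t1)].
  apply/subsetP => q; rewrite inE => /existsP[i1 /existsP[t1 /and3P[_ _ h]]].
  by apply/bigcupP; exists i1 => //; apply/bigcupP; exists t1 => //; rewrite inE.
apply: leq_trans (subset_leq_card sub) _.
apply: leq_trans (card_big_setU' _ _ _) _.
rewrite -[X in (_ <= X * _)%N]card_ord -sum_nat_const.
apply: leq_sum => i1 _.
apply: leq_trans (card_big_setU' _ _ _) _.
rewrite -[X in (_ <= X * _)%N]card_ord -sum_nat_const.
by apply: leq_sum => t1 _; apply: card_pre.
Qed.

Definition indep (t m N : nat) (C : {set 'S_N}) : bool :=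
  [forall p in C, forall q in C, (p != q) ==> ~~ confb t m p q].

Lemma exists_code t m N :
  exists C : {set 'S_N}, indep t m C /\
    (N`! <= #|C| * (N * (t.+1 * (2 * t.+1))).+1)%N.
Proof.
have i0 : indep t m (set0 : {set 'S_N}).
  by apply/forall_inP => p; rewrite inE.
have [C mC _] := maxset_exists i0.
have iC := maxsetp mC.
exists C; split => //.
have cov : [set: 'S_N] \subset \bigcup_(c in C) (c |: [set q : 'S_N | confb t m c q]).
  apply/subsetP => p _.
  case: (boolP (p \in C)) => pC.
    by apply/bigcupP; exists p => //; rewrite !inE eqxx.
  case: (boolP [exists c in C, confb t m c p]).
    move=> /exists_inP[c cC hc]; apply/bigcupP; exists c => //.
    by rewrite !inE hc orbT.
  move=> /exists_inPn nc.
  have iB : indep t m (p |: C).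
    apply/forall_inP => x xB; apply/forall_inP => y yB; apply/implyP => nxy.
    move: nxy xB yB; rewrite !inE.
    case: (eqVneq x p) => [->|nxp] /=; case: (eqVneq y p) => [->|nyp] /=.
    - by [].
    - by move=> _ _ yC; apply/negP => /conf_sym h; move: (nc y yC); rewrite h.
    - by move=> _ xC _; exact: nc.
    - move=> nxy xC yC.
      by move/forall_inP: iC => /(_ x xC) /forall_inP /(_ y yC) /implyP /(_ nxy).
  have := maxsetsup mC iB (subsetUr _ _) => e.
  by move: pC; rewrite -e setU11.
have := subset_leq_card cov; rewrite cardsT card_Sn => h.
apply: leq_trans h _.
apply: leq_trans (card_big_setU' _ _ _) _.
rewrite -sum_nat_const; apply: leq_sum => c _.
by rewrite cardsU1 -add1n leq_add ?leq_b1 ?card_nb.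
Qed.

Lemma fact_split n k : (n + k)`! = n`! * \prod_(i < k) (n + i).+1.
Proof.
elim: k => [|k IH]; first by rewrite addn0 big_ord0 muln1.
rewrite addnS factS IH big_ord_recr /=; lia.
Qed.

Lemma arith n t t' : (0 < t)%N ->
  (2 * (t + 2) * (2 * t + 1) * t ^ 2 <= \prod_(i < t') (n - i))%N ->
  (n`! * ((n + t' + 1) * (t.+1 * (2 * t.+1))).+1 <= (n + t' + 1)`!)%N.
Proof.
move=> tp hP.
have -> : (n + t' + 1 = n + t'.+1)%N by rewrite addn1 addnS.
rewrite fact_split leq_mul2l; apply/orP; right.
rewrite big_ord_recr /=.
have hl : (\prod_(i < t') (n - i) <= \prod_(i < t') (n + i).+1)%N.
  by apply: leq_prod => i _; lia.
have h2 : (2 * (t + 2) * (2 * t + 1) * t ^ 2 <= \prod_(i < t') (n + i).+1)%N.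
  exact: leq_trans hP hl.
move: h2; set P := \prod_(i < t') _ => h2.
have h3 : (t.+1 * (2 * t.+1) + 1 <= 2 * (t + 2) * (2 * t + 1) * t ^ 2)%N.
  rewrite expnS expn1; nia.
rewrite addnS.
have h4 : (t.+1 * (2 * t.+1) + 1 <= P)%N by exact: leq_trans h3 h2.
nia.
Qed.

Theorem theorem3 (n t t' m : nat) :
  (0 < n)%N -> (0 < t)%N -> (0 < t')%N ->
  (t + 12 <= n)%N ->
  (2 * (t + 2) * (2 * t + 1) * t ^ 2 <= \prod_(i < t') (n - i))%N ->
  exists (E : 'S_n -> 'S_(n + t' + 1))
         (D : {ffun 'I_(n + t' + 1) -> int} -> 'S_n),
    forall (sigma : 'S_n) (pe : {ffun 'I_(n + t' + 1) -> int}),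
      stuck_at_error t m (E sigma) pe -> D pe = sigma.
Proof.
move=> _ tp _ _ hP.
have [C [iC hC]] := exists_code t m (n + t' + 1).
have hA := arith tp hP.
have hsz : (n`! <= #|C|)%N.
  by rewrite -(@leq_pmul2r ((n + t' + 1) * (t.+1 * (2 * t.+1))).+1) //; exact: leq_trans hA hC.
pose E (s : 'S_n) : 'S_(n + t' + 1) := nth 1%g (enum C) (enum_rank s).
have Elt (s : 'S_n) : (enum_rank s < size (enum C))%N.
  by rewrite -cardE; apply: leq_trans hsz; rewrite -card_Sn ltn_ord.
have EC s : E s \in C by rewrite -mem_enum mem_nth.
have Einj : injective E.
  move=> s1 s2 /eqP; rewrite /E nth_uniq ?enum_uniq // => /eqP /val_inj.
  exact: enum_rank_inj.
pose D (pe : {ffun 'I_(n + t' + 1) -> int}) : 'S_n :=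
  if [pick s | errb t m (E s) pe] is Some s then s else 1%g.
exists E, D => sigma pe /errP hs.
rewrite /D; case: pickP => [s hs'|none]; last by move: (none sigma); rewrite hs.
apply: Einj.
case: (eqVneq (E s) (E sigma)) => // ne.
have hc : confb t m (E s) (E sigma) by apply/confP; exists pe.
by move/forall_inP: iC => /(_ _ (EC s)) /forall_inP /(_ _ (EC sigma)) /implyP /(_ ne); rewrite hc.
Qed.
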